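(* Let $\mathbb{H}$ be a (normalized) quantum channel entropy and let $\mathcal{V}\in\mathrm{CPTP}(A\to B)$ be an isometry channel. Then $\mathbb{H}(B|A)_{\mathcal{V}}=-\log|A|$. In particular, every channel entropy takes negative values on isometry channels with $|A|>1$.
   Context: Systems are finite-dimensional; $\mathbf{u}^B=I^B/|B|$; $\log$ is base 2; a state is identified with a channel with trivial input. A superchannel from $\mathrm{CPTP}(A\to B)$ to $\mathrm{CPTP}(A'\to B)$ is $\Theta[\mathcal{N}]=\mathcal{E}^{RB\to B}\circ\mathcal{N}^{A\to B}\circ\mathcal{V}^{A'\to RA}$ with $\mathcal{V}$ an isometry channel and $\mathcal{E}$ a channel; it is mixing if in a realization with minimal $|R|$, $\mathcal{E}(\tau^R\otimes\mathbf{u}^B)=\mathbf{u}^B$ for every density matrix $\tau^R$. For same output, $\mathcal{N}\succ\mathcal{M}$ iff $\mathcal{M}=\Theta[\mathcal{N}]$ for a mixing $\Theta$; for $\mathcal{N}\in\mathrm{CPTP}(A\to B)$, $\mathcal{M}\in\mathrm{CPTP}(A'\to B')$: if $|B|>|B'|$, $\mathcal{N}\succ\mathcal{M}$ iff $\mathcal{N}\succ\mathcal{U}\circ\mathcal{M}$ for some isometry channel $\mathcal{U}:B'\to B$; if $|B|\le|B'|$, iff $\mathcal{W}\circ\mathcal{N}\succ\mathcal{M}$ for some isometry channel $\mathcal{W}:B\to B'$. A (normalized) channel entropy is a function $\mathcal{N}^{A\to B}\mapsto\mathbb{H}(B|A)_{\mathcal{N}}\in\mathbb{R}$ on all channels between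 finite-dimensional systems, not identically zero, such that: (monotonicity) $\mathcal{N}^{A\to B}\succ\mathcal{M}^{A'\to B'}$ implies $\mathbb{H}(B|A)_{\mathcal{N}}\le\mathbb{H}(B'|A')_{\mathcal{M}}$; (additivity) $\mathbb{H}(BB'|AA')_{\mathcal{N}\otimes\mathcal{M}}=\mathbb{H}(B|A)_{\mathcal{N}}+\mathbb{H}(B'|A')_{\mathcal{M}}$; (normalization) the uniform qubit state has entropy $1$. *)

(* Defs.v *)
From HB Require Import structures.
From mathcomp Require Import all_boot all_order all_algebra.
From mathcomp Require Import complex mxtens.
From mathcomp Require Import reals exp.

Set Implicit Arguments.
Unset Strict Implicit.
Unset Printing Implicit Defensive.

Import Order.TTheory GRing.Theory Num.Theory.
Local Open Scope ring_scope.

Section QuantumChannels.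
Variable R : realType.
Local Notation C := R[i].

Definition adjmx (m n : nat) (A : 'M[C]_(m, n)) : 'M[C]_(n, m) :=
  (map_mx Num.conj A)^T.

Definition psd (n : nat) (X : 'M[C]_n) : Prop :=
  forall v : 'cV[C]_n, 0 <= (adjmx v *m X *m v) 0 0.

Definition density (n : nat) (X : 'M[C]_n) : Prop := psd X /\ \tr X = 1.

Definition unif (m : nat) : 'M[C]_m := (m%:R)^-1 *: 1%:M.

Definition chan_map (n m : nat) := 'M[C]_n -> 'M[C]_m.

Definition is_linear_map (n m : nat) (N : chan_map n m) : Prop :=
  forall (a : C) (X Y : 'M[C]_n), N (a *: X + Y) = a *: N X + N Y.

(* tensor product N (x) M of linear maps, defined on matrix units
   E_{(a,b),(c,d)} = E_{ac} (x) E_{bd} and extended linearly *)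
Definition tens_map (n m n' m' : nat) (N : chan_map n m) (M : chan_map n' m')
  : chan_map (n * n') (m * m') :=
  fun X => \sum_(i < n * n') \sum_(j < n * n')
     X i j *: (N (delta_mx (mxtens_unindex i).1 (mxtens_unindex j).1)
               *t M (delta_mx (mxtens_unindex i).2 (mxtens_unindex j).2)).

Definition id_map (k : nat) : chan_map k k := fun X => X.

Definition completely_positive (n m : nat) (N : chan_map n m) : Prop :=
  forall (k : nat) (X : 'M[C]_(k * n)), psd X -> psd (tens_map (@id_map k) N X).

Definition trace_preserving (n m : nat) (N : chan_map n m) : Prop :=
  forall X : 'M[C]_n, \tr (N X) = \tr X.

Definition CPTP (n m : nat) (N : chan_map n m) : Prop :=
  [/\ is_linear_map N, completely_positive N & trace_preserving N].

(* is_isometry V : C^n -> C^m (column-vector convention) and its channel *)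
Definition is_isometry (m n : nat) (V : 'M[C]_(m, n)) : Prop :=
  adjmx V *m V = 1%:M.

Definition iso_chan (m n : nat) (V : 'M[C]_(m, n)) : chan_map n m :=
  fun X => V *m X *m adjmx V.

(* a state of B, as a channel with trivial (1-dimensional) input:
   the uniform state X |-> tr(X) u^B *)
Definition uniform_state (m : nat) : chan_map 1 m :=
  fun X => \tr X *: unif m.

(* Superchannel Theta[N] = E o (id_R (x) N) o V with |R| = k,
   V : A' -> R A an is_isometry (channel), E : R B -> B a channel. *)
Definition superchan_apply (k n' n m : nat) (V : 'M[C]_(k * n, n'))
  (E : chan_map (k * m) m) (N : chan_map n m) : chan_map n' m :=
  fun X => E (tens_map (@id_map k) N (iso_chan V X)).

Definition realization (k n' n m : nat) (V : 'M[C]_(k * n, n'))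
  (E : chan_map (k * m) m) : Prop :=
  [/\ (0 < k)%N, is_isometry V & CPTP E].

Definition minimal_realization (k n' n m : nat) (V : 'M[C]_(k * n, n'))
  (E : chan_map (k * m) m) : Prop :=
  realization V E /\
  forall (k' : nat) (V' : 'M[C]_(k' * n, n')) (E' : chan_map (k' * m) m),
    realization V' E' ->
    (forall N : chan_map n m, CPTP N ->
       forall X, superchan_apply V E N X = superchan_apply V' E' N X) ->
    (k <= k')%N.

Definition mixing_realization (k n' n m : nat) (V : 'M[C]_(k * n, n'))
  (E : chan_map (k * m) m) : Prop :=
  minimal_realization V E /\
  forall tau : 'M[C]_k, density tau -> E (tau *t unif m) = unif m.

Definition majorizes_same (n n' m : nat) (N : chan_map n m) (M : chan_map n' m)
  : Prop :=
  exists (k : nat) (V : 'M[C]_(k * n, n')) (E : chan_map (k * m) m),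
    mixing_realization V E /\ forall X, M X = superchan_apply V E N X.

Definition majorizes (n m n' m' : nat) (N : chan_map n m) (M : chan_map n' m')
  : Prop :=
  if (m' < m)%N then
    exists U : 'M[C]_(m, m'), is_isometry U /\
      majorizes_same N (fun X => iso_chan U (M X))
  else
    exists W : 'M[C]_(m', m), is_isometry W /\
      majorizes_same (fun X => iso_chan W (N X)) M.

Definition channel_entropy (H : forall n m : nat, chan_map n m -> R) : Prop :=
  [/\ (exists (n m : nat) (N : chan_map n m),
         [/\ (0 < n)%N, (0 < m)%N, CPTP N & H n m N <> 0]),
      (forall (n m n' m' : nat) (N : chan_map n m) (M : chan_map n' m'),
         (0 < n)%N -> (0 < m)%N -> (0 < n')%N -> (0 < m')%N ->
         CPTP N -> CPTP M -> majorizes N M -> H n m N <= H n' m' M),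
      (forall (n m n' m' : nat) (N : chan_map n m) (M : chan_map n' m'),
         (0 < n)%N -> (0 < m)%N -> (0 < n')%N -> (0 < m')%N ->
         CPTP N -> CPTP M ->
         H (n * n')%N (m * m')%N (tens_map N M) = H n m N + H n' m' M)
    & H 1%N 2%N (uniform_state 2) = 1].

Definition log2 (x : R) : R := ln x / ln 2.

End QuantumChannels.

(* Main.v *)
Require Import Defs.
From HB Require Import structures.
From mathcomp Require Import all_boot all_order all_algebra.
From mathcomp Require Import complex mxtens.
From mathcomp Require Import reals exp.
From mathcomp Require Import ring lra zify.
From Stdlib Require Import FunctionalExtensionality.
Import Order.TTheory GRing.Theory Num.Theory.
Local Open Scope ring_scope.

Set Implicit Arguments.
Unset Strict Implicit.
Unset Printing Implicit Defensive.

Section QA.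
Variable R : realType.
Local Notation C := R[i].

Lemma adjmxE m n (A : 'M[C]_(m,n)) i j : adjmx A i j = (A j i)^*.
Proof. by rewrite /adjmx !mxE. Qed.

Lemma adjmxM m n p (A : 'M[C]_(m,n)) (B : 'M[C]_(n,p)) :
  adjmx (A *m B) = adjmx B *m adjmx A.
Proof.
apply/matrixP => i j; rewrite !adjmxE !mxE rmorph_sum; apply: eq_bigr => k _.
by rewrite !adjmxE rmorphM mulrC.
Qed.

Lemma adjmxK m n (A : 'M[C]_(m,n)) : adjmx (adjmx A) = A.
Proof. by apply/matrixP => i j; rewrite !adjmxE conjCK. Qed.

Lemma adjmxD m n (A B : 'M[C]_(m,n)) : adjmx (A + B) = adjmx A + adjmx B.
Proof. by apply/matrixP => i j; rewrite !mxE rmorphD. Qed.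

Lemma adjmxZ m n (c : C) (A : 'M[C]_(m,n)) : adjmx (c *: A) = c^* *: adjmx A.
Proof. by apply/matrixP => i j; rewrite !mxE rmorphM. Qed.

Lemma adjmx1 n : adjmx (1%:M : 'M[C]_n) = 1%:M.
Proof. by apply/matrixP => i j; rewrite !mxE rmorph_nat eq_sym. Qed.

Lemma adjmx0 m n : adjmx (0 : 'M[C]_(m,n)) = 0.
Proof. by apply/matrixP => i j; rewrite !mxE rmorph0. Qed.

Lemma adjmx_sum (I : finType) m n (F : I -> 'M[C]_(m,n)) :
  adjmx (\sum_i F i) = \sum_i adjmx (F i).
Proof.
apply/matrixP => i j; rewrite adjmxE !summxE rmorph_sum.
by apply: eq_bigr => k _; rewrite adjmxE.
Qed.

Lemma adjmx_tens m n p q (A : 'M[C]_(m,n)) (B : 'M[C]_(p,q)) :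
  adjmx (A *t B) = adjmx A *t adjmx B.
Proof. by apply/matrixP => i j; rewrite !mxE rmorphM. Qed.

Lemma tens_suml (I : finType) m n p q (F : I -> 'M[C]_(m,n)) (B : 'M[C]_(p,q)) :
  (\sum_i F i) *t B = \sum_i (F i *t B).
Proof.
apply/matrixP => i j; rewrite summxE mxE summxE mulr_suml.
by apply: eq_bigr => k _; rewrite !mxE.
Qed.

Lemma tens_sumr (I : finType) m n p q (A : 'M[C]_(m,n)) (F : I -> 'M[C]_(p,q)) :
  A *t (\sum_i F i) = \sum_i (A *t F i).
Proof.
apply/matrixP => i j; rewrite summxE mxE summxE mulr_sumr.
by apply: eq_bigr => k _; rewrite !mxE.
Qed.

Lemma tensZl m n p q (c : C) (A : 'M[C]_(m,n)) (B : 'M[C]_(p,q)) :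
  (c *: A) *t B = c *: (A *t B).
Proof. by apply/matrixP => i j; rewrite !mxE mulrA. Qed.

Lemma tensZr m n p q (c : C) (A : 'M[C]_(m,n)) (B : 'M[C]_(p,q)) :
  A *t (c *: B) = c *: (A *t B).
Proof. by apply/matrixP => i j; rewrite !mxE mulrCA. Qed.

Lemma mxtens_index_eq m n (i k : 'I_m) (j l : 'I_n) :
  (mxtens_index (i, j) == mxtens_index (k, l)) = (i == k) && (j == l).
Proof. by rewrite (can_eq (@mxtens_indexK m n)) xpair_eqE. Qed.

Lemma tens11 m n : (1%:M : 'M[C]_m) *t (1%:M : 'M[C]_n) = 1%:M.
Proof.
apply/matrixP => i j.
case: (mxtens_indexP i) => i1 i2; case: (mxtens_indexP j) => j1 j2.
by rewrite tensmxE !mxE mxtens_index_eq -natrM mulnb.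
Qed.

Lemma tens_delta m n (i j : 'I_(m * n)) :
  delta_mx i j = delta_mx (mxtens_unindex i).1 (mxtens_unindex j).1
                 *t (delta_mx (mxtens_unindex i).2 (mxtens_unindex j).2 : 'M[C]_n).
Proof.
case: (mxtens_indexP i) => i1 i2; case: (mxtens_indexP j) => j1 j2.
rewrite !mxtens_indexK /=; apply/matrixP => k l.
case: (mxtens_indexP k) => k1 k2; case: (mxtens_indexP l) => l1 l2.
rewrite tensmxE !mxE !mxtens_index_eq -natrM mulnb.
by case: (k1 == i1); case: (k2 == i2); case: (l1 == j1); case: (l2 == j2).
Qed.

Lemma big_unit (V : nmodType) (F : unit -> V) : \sum_i F i = F tt.
Proof. by rewrite (bigD1 tt) //= big1 ?addr0 // => -[]; rewrite eqxx. Qed.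

Definition kraus (I : finType) (n m : nat) (c : I -> C) (A : I -> 'M[C]_(m,n))
  : chan_map R n m := fun X => \sum_i c i *: (A i *m X *m adjmx (A i)).

Lemma kraus_linear (I : finType) n m (c : I -> C) (A : I -> 'M[C]_(m,n)) :
  is_linear_map (kraus c A).
Proof.
move=> a X Y; rewrite /kraus scaler_sumr -big_split /=; apply: eq_bigr => i _.
by rewrite mulmxDr mulmxDl scalerDr -scalemxAr -scalemxAl !scalerA mulrC.
Qed.

Lemma kraus_ext (I : finType) n m (c c' : I -> C) (A A' : I -> 'M[C]_(m,n)) :
  c =1 c' -> A =1 A' -> kraus c A =1 kraus c' A'.
Proof. by move=> hc hA X; apply: eq_bigr => i _; rewrite hc hA. Qed.

Lemma psd_congr n m (B : 'M[C]_(m,n)) (X : 'M[C]_n) :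
  psd X -> psd (B *m X *m adjmx B).
Proof.
move=> hX v.
have -> : adjmx v *m (B *m X *m adjmx B) *m v
          = adjmx (adjmx B *m v) *m X *m (adjmx B *m v).
  by rewrite adjmxM adjmxK !mulmxA.
exact: hX.
Qed.

Lemma psd_sum (I : finType) n (c : I -> C) (F : I -> 'M[C]_n) :
  (forall i, 0 <= c i) -> (forall i, psd (F i)) -> psd (\sum_i c i *: F i).
Proof.
move=> hc hF v.
rewrite mulmx_sumr mulmx_suml summxE; apply: sumr_ge0 => i _.
rewrite -scalemxAr -scalemxAl mxE; apply: mulr_ge0 => //; exact: hF.
Qed.

Lemma psd_kraus (I : finType) n m (c : I -> C) (A : I -> 'M[C]_(m,n)) X :
  (forall i, 0 <= c i) -> psd X -> psd (kraus c A X).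
Proof. by move=> hc hX; apply: psd_sum => // i; apply: psd_congr. Qed.

Lemma tr_kraus (I : finType) n m (c : I -> C) (A : I -> 'M[C]_(m,n)) X :
  \tr (kraus c A X) = \tr ((\sum_i c i *: (adjmx (A i) *m A i)) *m X).
Proof.
rewrite /kraus mulmx_suml !raddf_sum /=; apply: eq_bigr => i _.
by rewrite -scalemxAl !mxtraceZ mxtrace_mulC mulmxA.
Qed.

Lemma tens_mapE n m n' m' (N : chan_map R n m) (M : chan_map R n' m')
  (I J : finType) (c : I -> C) (A : I -> 'M[C]_(m,n))
  (d : J -> C) (B : J -> 'M[C]_(m',n')) :
  N =1 kraus c A -> M =1 kraus d B ->
  tens_map N M =1 kraus (fun p : I * J => c p.1 * d p.2) (fun p => A p.1 *t B p.2).
Proof.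
move=> hN hM Y; rewrite /tens_map /kraus.
have -> : \sum_(i < n * n') \sum_(j < n * n') Y i j *: (N
            (delta_mx (mxtens_unindex i).1 (mxtens_unindex j).1) *t M
            (delta_mx (mxtens_unindex i).2 (mxtens_unindex j).2))
   = \sum_(p : I * J) \sum_(i < n * n') \sum_(j < n * n') Y i j *:
       ((c p.1 * d p.2) *: ((A p.1 *t B p.2) *m delta_mx i j *m adjmx (A p.1 *t B p.2))).
  rewrite [RHS]exchange_big /=; apply: eq_bigr => i _.
  rewrite [RHS]exchange_big /=; apply: eq_bigr => j _.
  rewrite -scaler_sumr; congr (_ *: _).
  rewrite hN hM /kraus tens_suml.
  rewrite -(pair_bigA _ (fun a b => (c a * d b) *: (A a *t B b *m delta_mx i j *m adjmx (A a *t B b)))) /=.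
  apply: eq_bigr => a _.
  rewrite tens_sumr; apply: eq_bigr => b _.
  rewrite tensZl tensZr scalerA adjmx_tens tens_delta !tensmx_mul.
  by [].
apply: eq_bigr => p _.
rewrite [X in _ = _ *: (_ *m X *m _)]matrix_sum_delta.
rewrite mulmx_sumr mulmx_suml scaler_sumr; apply: eq_bigr => i _.
rewrite mulmx_sumr mulmx_suml scaler_sumr; apply: eq_bigr => j _.
by rewrite -scalemxAr -scalemxAl !scalerA mulrC.
Qed.

Lemma id_krausE k : @id_map R k =1 kraus (fun _ : unit => 1) (fun _ => (1%:M : 'M[C]_k)).
Proof. by move=> X; rewrite /kraus /id_map big_unit scale1r mul1mx adjmx1 mulmx1. Qed.

Lemma iso_krausE m n (V : 'M[C]_(m,n)) :
  iso_chan V =1 kraus (fun _ : unit => 1) (fun _ => V).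
Proof. by move=> X; rewrite /kraus /iso_chan big_unit scale1r. Qed.

Lemma kraus_comp (I J : finType) n m p (c : I -> C) (A : I -> 'M[C]_(m,n))
  (d : J -> C) (B : J -> 'M[C]_(p,m)) X :
  kraus d B (kraus c A X) =
  kraus (fun q : J * I => d q.1 * c q.2) (fun q => B q.1 *m A q.2) X.
Proof.
rewrite /kraus -(pair_bigA _ (fun j i => (d j * c i) *: ((B j *m A i) *m X *m adjmx (B j *m A i)))) /=.
apply: eq_bigr => j _.
rewrite mulmx_sumr mulmx_suml scaler_sumr; apply: eq_bigr => i _.
by rewrite -scalemxAr -scalemxAl scalerA adjmxM !mulmxA.
Qed.

Lemma kraus_CPTP (I : finType) n m (c : I -> C) (A : I -> 'M[C]_(m,n)) :
  (forall i, 0 <= c i) -> \sum_i c i *: (adjmx (A i) *m A i) = 1%:M ->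
  CPTP (kraus c A).
Proof.
move=> hc h1; split; first exact: kraus_linear.
- move=> k X hX.
  rewrite (tens_mapE (@id_krausE k) (fun Y => erefl)).
  by apply: psd_kraus => // p; rewrite mul1r.
- by move=> X; rewrite tr_kraus h1 mul1mx.
Qed.

Lemma sum_pair (V : nmodType) (I J : finType) (F : I * J -> V) :
  \sum_p F p = \sum_i \sum_j F (i, j).
Proof. by rewrite (pair_bigA _ (fun i j => F (i, j))); apply: eq_bigr => -[i j]. Qed.

Lemma superchan_krausE k n' n m (V : 'M[C]_(k * n, n')) (E : chan_map R (k * m) m)
  (N : chan_map R n m) (I J : finType) (c : I -> C) (A : I -> 'M[C]_(m,n))
  (d : J -> C) (B : J -> 'M[C]_(m, k * m)) X :
  N =1 kraus c A -> E =1 kraus d B ->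
  superchan_apply V E N X =
  \sum_j \sum_i (d j * c i) *: ((B j *m (1%:M *t A i) *m V) *m X
                                 *m adjmx (B j *m (1%:M *t A i) *m V)).
Proof.
move=> hN hE; rewrite /superchan_apply hE.
rewrite (tens_mapE (@id_krausE k) hN) iso_krausE kraus_comp kraus_comp.
rewrite /kraus !sum_pair; apply: eq_bigr => j _.
rewrite (@sum_pair _ unit I) big_unit; apply: eq_bigr => i _.
by rewrite big_unit /= mul1r mulr1.
Qed.

End QA.

Set Implicit Arguments.
Unset Strict Implicit.
Unset Printing Implicit Defensive.

Section QB.
Variable R : realType.
Local Notation C := R[i].

Definition idm p q : 'M[C]_(p,q) := \matrix_(i,j) ((i : nat) == j)%:R.

Lemma idm_mull p q r (M : 'M[C]_(q,r)) (e : q = p) :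
  idm p q *m M = castmx (e, erefl) M.
Proof.
apply/matrixP => i j; rewrite castmxE mxE (bigD1 (cast_ord (esym e) i)) //=.
rewrite big1 ?addr0; first by rewrite !mxE /= eqxx mul1r cast_ord_id.
move=> k hk; rewrite !mxE.
have -> : ((i : nat) == k) = false.
  apply/negbTE; apply: contra hk => /eqP h; apply/eqP/val_inj => /=; by rewrite h.
by rewrite mul0r.
Qed.

Lemma idm_mulr p q r (M : 'M[C]_(r,q)) (e : q = p) :
  M *m idm q p = castmx (erefl, e) M.
Proof.
apply/matrixP => i j; rewrite castmxE mxE (bigD1 (cast_ord (esym e) j)) //=.
rewrite big1 ?addr0; first by rewrite !mxE /= eqxx mulr1 cast_ord_id.
move=> k hk; rewrite !mxE.
have -> : ((k : nat) == j) = false.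
  apply/negbTE; apply: contra hk => /eqP h; apply/eqP/val_inj => /=; by rewrite h.
by rewrite mulr0.
Qed.

Lemma adjmx_idm p q : adjmx (idm p q) = idm q p.
Proof. by apply/matrixP => i j; rewrite !mxE rmorph_nat eq_sym. Qed.

Lemma castmx_idE m n (e : (m = m) * (n = n)) (A : 'M[C]_(m,n)) : castmx e A = A.
Proof. by apply/matrixP => i j; rewrite castmxE !cast_ord_id. Qed.

Lemma idm_sq p q (e : p = q) : idm p q *m idm q p = 1%:M.
Proof.
rewrite (idm_mull _ (esym e)); apply/matrixP => i j; rewrite castmxE !mxE /=.
by [].
Qed.

Lemma idm_iso p q (e : p = q) : is_isometry (idm p q).
Proof. by rewrite /is_isometry adjmx_idm idm_sq. Qed.

Lemma one_tens m n (A : 'M[C]_(m,n)) :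
  idm m (1 * m) *m (1%:M *t A) *m idm (1 * n) n = A.
Proof.
rewrite tens_scalar1mx (idm_mull _ (mul1n m)) (idm_mulr _ (mul1n n)).
by rewrite !castmx_comp castmx_idE.
Qed.

Lemma iso_le p q (V : 'M[C]_(p,q)) : is_isometry V -> (q <= p)%N.
Proof. by move=> hV; have := mulmx_max_rank (adjmx V) V; rewrite hV mxrank1. Qed.

Lemma density1 (tau : 'M[C]_1) : density tau -> tau = 1%:M.
Proof.
move=> [_ htr]; rewrite [tau]mx11_scalar; congr (_%:M).
by move: htr; rewrite /mxtrace big_ord1.
Qed.

Lemma unif_krausE d :
  @uniform_state R d =1 kraus (fun _ : 'I_d => d%:R^-1) (fun i => (delta_mx i 0 : 'M[C]_(d,1))).
Proof.
move=> X; rewrite /uniform_state /unif /kraus [X]mx11_scalar.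
rewrite /mxtrace big_ord1 mxE eqxx mulr1n.
have -> : \sum_i d%:R^-1 *: ((delta_mx i 0 : 'M[C]_(d,1)) *m ((X 0 0)%:M : 'M[C]_1) *m adjmx (delta_mx i 0 : 'M[C]_(d,1)))
          = \sum_(i < d) (d%:R^-1 * X 0 0) *: (delta_mx i i : 'M[C]_d).
  apply: eq_bigr => i _; rewrite mul_mx_scalar -scalemxAl scalerA.
  have -> : adjmx (delta_mx i 0 : 'M[C]_(d,1)) = delta_mx 0 i.
    by apply/matrixP => a b; rewrite !mxE rmorph_nat andbC.
  by rewrite mul_delta_mx mulrC.
rewrite -scaler_sumr scalerA mulrC; congr (_ *: _).
apply/matrixP => a b; rewrite summxE !mxE (bigD1 a) //= big1 ?addr0.
  by rewrite !mxE eqxx /= eq_sym.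
by move=> k hk; rewrite !mxE [a == k]eq_sym (negbTE hk).
Qed.

Lemma maj_k1 n n' m (N : chan_map R n m) (M : chan_map R n' m) (I : finType)
  (c : I -> C) (A : I -> 'M[C]_(m,n)) (V0 : 'M[C]_(n,n')) :
  N =1 kraus c A -> is_isometry V0 ->
  (forall X, M X = kraus c (fun i => A i *m V0) X) -> majorizes_same N M.
Proof.
move=> hN hV hM.
have hE : kraus (fun _ : unit => 1) (fun _ => idm m (1 * m)) =1
          kraus (fun _ : unit => 1) (fun _ => idm m (1 * m)) by [].
exists 1%N, (idm (1 * n) n *m V0), (kraus (fun _ : unit => 1) (fun _ => idm m (1 * m))).
split; first split; first split.
- split => //.
  + by rewrite /is_isometry adjmxM adjmx_idm mulmxA -(mulmxA (adjmx V0)) idm_sq ?mul1n // mulmx1.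
  + apply: kraus_CPTP => [_|]; first exact: ler01.
    by rewrite big_unit scale1r adjmx_idm idm_sq // mul1n.
- by move=> k' V' E' [hk' _ _] _.
- move=> tau /density1 ->.
  rewrite /kraus big_unit scale1r adjmx_idm.
  by rewrite one_tens.
- move=> X; rewrite hM (superchan_krausE _ X hN hE) big_unit /kraus.
  apply: eq_bigr => i _; rewrite mul1r mulmxA one_tens.
  by [].
Qed.

End QB.

Set Implicit Arguments.
Unset Strict Implicit.
Unset Printing Implicit Defensive.

Section LogChar.
Variable R : realType.

Lemma log_char (f : nat -> R) :
  (forall a b, (0 < a)%N -> (0 < b)%N -> f (a * b)%N = f a + f b) ->
  (forall a b, (0 < b)%N -> (b <= a)%N -> f a <= f b) ->
  f 2%N = -1 -> forall n, (0 < n)%N -> f n = - log2 (n%:R : R).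
Proof.
move=> hmul hmono h2 n hn.
have f1 : f 1%N = 0.
  by have := hmul 1%N 1%N isT isT; rewrite muln1 => h; lra.
have fX : forall a j, (0 < a)%N -> f (a ^ j)%N = f a *+ j.
  move=> a j ha; elim: j => [|j IH]; first by rewrite expn0 f1.
  by rewrite expnS hmul ?expn_gt0 ?ha // IH mulrS.
have ln2 : 0 < ln (2 : R) by apply: ln_gt0; lra.
have key : forall j, (0 < j)%N -> `|f n + ln (n%:R : R) / ln 2| * j%:R <= 1.
  move=> j hj.
  have hN : (0 < n ^ j)%N by rewrite expn_gt0 hn.
  have := trunc_log_bounds (isT : (1 < 2)%N) hN.
  set l := trunc_log 2 (n ^ j) => /andP [hlo hhi]; clearbody l.
  have e1 : f (n ^ j)%N <= f (2 ^ l)%N by apply: hmono => //; rewrite expn_gt0.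
  have e2 : f (2 ^ l.+1)%N <= f (n ^ j)%N by apply: hmono => //; exact: ltnW.
  rewrite !fX // h2 in e1 e2.
  have pos : forall k : nat, (0 < k)%N -> (0 : R) < k%:R by move=> k hk; rewrite ltr0n.
  have l1 : ln (2 : R) *+ l <= ln (n%:R : R) *+ j.
    rewrite -!lnXn ?ltr0n // -!natrX ler_ln ?posrE ?ltr0n ?expn_gt0 ?hn // ler_nat.
    exact: hlo.
  have l2 : ln (n%:R : R) *+ j < ln (2 : R) *+ l.+1.
    rewrite -!lnXn ?ltr0n // -!natrX ltNge ler_ln ?posrE ?ltr0n ?expn_gt0 ?hn //.
    by rewrite ler_nat -ltnNge.
  have ey : ln (n%:R : R) = (ln (n%:R : R) / ln 2) * ln 2 by rewrite mulfVK ?gt_eqF.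
  move: (f n) (ln (n%:R : R) / ln 2) ey e1 e2 => x y ey e1 e2.
  have A : x * j%:R <= - (l%:R : R) by move: e1; rewrite -[x *+ j]mulr_natr -[-1 *+ l]mulr_natr mulN1r.
  have B : - ((l%:R : R) + 1) <= x * j%:R.
    by move: e2; rewrite -[x *+ j]mulr_natr -[-1 *+ l.+1]mulr_natr mulN1r -natr1.
  have C0 : (l%:R : R) <= y * j%:R.
    move: l1; rewrite ey -[ln 2 *+ l]mulr_natl -[(y * ln 2) *+ j]mulr_natl mulrA => l1.
    by rewrite mulrC -(ler_pM2r ln2).
  have D : y * j%:R < (l%:R : R) + 1.
    move: l2; rewrite ey -[ln 2 *+ l.+1]mulr_natl -[(y * ln 2) *+ j]mulr_natl mulrA -[(l.+1)%:R]natr1 => l2.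
    by rewrite mulrC -(ltr_pM2r ln2).
  have hJ : (0 : R) <= j%:R by rewrite ler0n.
  rewrite -[X in _ * X <= _](ger0_norm hJ) -normrM mulrDl ler_norml.
  by apply/andP; split; lra.
move: (key) => {}key.
have z0 : f n + ln (n%:R : R) / ln 2 = 0.
  move: (f n + ln (n%:R : R) / ln 2) key => z key.
  apply/eqP; apply/negPn/negP => hz.
  have hz' : 0 < `|z| by rewrite normr_gt0.
  have := key (Num.trunc (`|z|^-1)).+1 isT.
  have := truncnS_gt (`|z|^-1) => hlt.
  rewrite -(ltr_pM2l hz') mulfV ?gt_eqF // in hlt.
  by rewrite leNgt hlt.
by rewrite /log2; lra.
Qed.

End LogChar.

Set Implicit Arguments.
Unset Strict Implicit.
Unset Printing Implicit Defensive.

Section QD.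
Variable R : realType.
Local Notation C := R[i].

Lemma CPTP_ext n m (N : chan_map R n m) (I : finType) (c : I -> C) (A : I -> 'M[C]_(m,n)) :
  N =1 kraus c A -> CPTP (kraus c A) -> CPTP N.
Proof. by move=> h; rewrite (functional_extensionality N _ h). Qed.

Lemma CPTP_id n : CPTP (@id_map R n).
Proof.
apply: (CPTP_ext (@id_krausE R n)); apply: kraus_CPTP => [_|]; first exact: ler01.
by rewrite big_unit scale1r adjmx1 mulmx1.
Qed.

Lemma CPTP_iso m n (V : 'M[C]_(m,n)) : is_isometry V -> CPTP (iso_chan V).
Proof.
move=> hV; apply: (CPTP_ext (iso_krausE V)); apply: kraus_CPTP => [_|]; first exact: ler01.
by rewrite big_unit scale1r hV.
Qed.

Lemma CPTP_unif d : (0 < d)%N -> CPTP (@uniform_state R d).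
Proof.
move=> hd; apply: (CPTP_ext (@unif_krausE R d)); apply: kraus_CPTP => [_|].
  by rewrite invr_ge0 ler0n.
have e : forall i : 'I_d, adjmx (delta_mx i 0 : 'M[C]_(d,1)) *m delta_mx i 0 = 1%:M.
  move=> i; apply/matrixP => a b; rewrite !mxE (bigD1 i) //= big1 ?addr0.
    by rewrite !mxE !eqxx /= !ord1 eqxx rmorph_nat mul1r.
  by move=> k hk; rewrite !mxE (negbTE hk) /= mulr0.
rewrite (eq_bigr (fun _ => d%:R^-1 *: 1%:M)); last by move=> i _; rewrite e.
rewrite sumr_const card_ord -scaler_nat scalerA mulrV ?scale1r //.
by rewrite unitfE pnatr_eq0 -lt0n.
Qed.

Lemma idm_iso_le a b : (b <= a)%N -> is_isometry (idm R a b).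
Proof.
move=> hba; rewrite /is_isometry adjmx_idm; apply/matrixP => i j.
rewrite !mxE (bigD1 (widen_ord hba i)) //= big1 ?addr0.
  by rewrite !mxE /= eqxx mul1r.
move=> k hk; rewrite !mxE.
have -> : ((i : nat) == k) = false.
  apply/negbTE; apply: contra hk => /eqP h; apply/eqP/val_inj => /=; by rewrite h.
by rewrite mul0r.
Qed.

Lemma tens_id a b : tens_map (@id_map R a) (@id_map R b) = @id_map R (a * b).
Proof.
apply: functional_extensionality => X.
rewrite (tens_mapE (@id_krausE R a) (@id_krausE R b)) /kraus sum_pair !big_unit /=.
by rewrite tens11 mul1r scale1r mul1mx adjmx1 mulmx1.
Qed.

End QD.

Unset Implicit Arguments.
Section QE.
Variable R : realType.
Local Notation C := R[i].
Variable H : forall n m : nat, chan_map R n m -> R.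
Hypothesis hH : channel_entropy H.

Lemma h_mul a b : (0 < a)%N -> (0 < b)%N ->
  H (a * b)%N (a * b)%N (@id_map R (a * b)) = H a a (@id_map R a) + H b b (@id_map R b).
Proof.
case: hH => _ _ hadd _ ha hb.
by rewrite -tens_id hadd //; exact: CPTP_id.
Qed.

Lemma h_mono a b : (0 < b)%N -> (b <= a)%N ->
  H a a (@id_map R a) <= H b b (@id_map R b).
Proof.
case: hH => _ hmono _ _ hb; rewrite leq_eqVlt => /orP [/eqP -> //|hba].
have ha : (0 < a)%N by apply: leq_trans hb (ltnW hba).
apply: hmono => //; try exact: CPTP_id.
rewrite /majorizes hba; exists (idm R a b); split; first exact: (@idm_iso_le R a b (ltnW hba)).
apply: (maj_k1 (@id_krausE R a) (@idm_iso_le R a b (ltnW hba))).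
by move=> X; rewrite /kraus big_unit scale1r mul1mx.
Qed.

Lemma H_iso n m (V : 'M[C]_(m,n)) : (0 < n)%N -> is_isometry V ->
  H n m (iso_chan V) = H n n (@id_map R n).
Proof.
case: hH => _ hmono _ _ hn hV.
have hnm := iso_le hV.
have hm : (0 < m)%N by apply: leq_trans hn hnm.
have i1 : is_isometry (1%:M : 'M[C]_n) by rewrite /is_isometry adjmx1 mulmx1.
move: hnm; rewrite leq_eqVlt => /orP [/eqP e|hlt].
- subst m.
  have hV' : V *m adjmx V = 1%:M by apply: mulmx1C.
  apply/eqP; rewrite eq_le; apply/andP; split.
  + apply: hmono => //; [exact: CPTP_iso|exact: CPTP_id|].
    rewrite /majorizes ltnn; exists (adjmx V); split.
      by rewrite /is_isometry adjmxK.
    apply: (@maj_k1 _ _ _ _ _ _ _ (fun _ : unit => 1) (fun _ => 1%:M) 1%:M) => //.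
      move=> X; rewrite /kraus big_unit scale1r mul1mx adjmx1 mulmx1.
      by rewrite /iso_chan adjmxK !mulmxA hV mul1mx -mulmxA hV mulmx1.
    by move=> X; rewrite /kraus big_unit scale1r !mul1mx adjmx1 mulmx1 /id_map.
  + apply: hmono => //; [exact: CPTP_id|exact: CPTP_iso|].
    rewrite /majorizes ltnn; exists 1%:M; split => //.
    apply: (@maj_k1 _ _ _ _ _ _ _ (fun _ : unit => 1) (fun _ => 1%:M) V) => //.
      move=> X; rewrite /kraus big_unit scale1r /iso_chan /id_map.
      by rewrite adjmx1 mulmx1 mul1mx.
    by move=> X; rewrite /kraus big_unit scale1r mul1mx.
- apply/eqP; rewrite eq_le; apply/andP; split.
  + apply: hmono => //; [exact: CPTP_iso|exact: CPTP_id|].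
    rewrite /majorizes hlt; exists V; split => //.
    apply: (@maj_k1 _ _ _ _ _ _ _ (fun _ : unit => 1) (fun _ => V) 1%:M) => //.
      exact: iso_krausE.
    by move=> X; rewrite /kraus big_unit scale1r mulmx1.
  + apply: hmono => //; [exact: CPTP_id|exact: CPTP_iso|].
    rewrite /majorizes ltnNge (ltnW hlt) /=; exists V; split => //.
    apply: (@maj_k1 _ _ _ _ _ _ _ (fun _ : unit => 1) (fun _ => V) 1%:M) => //.
      by move=> X; rewrite /kraus big_unit scale1r.
    by move=> X; rewrite /kraus big_unit scale1r mulmx1.
Qed.

End QE.

Set Implicit Arguments.
Unset Strict Implicit.
Unset Printing Implicit Defensive.

Definition qf (b i j : nat) : int :=
  match b, i, j with
  | 0, 0, 0 => 1 | 0, 1, 1 => 1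
  | 1, 0, 1 => 1 | 1, 1, 0 => 1
  | 2, 0, 0 => 1 | 2, 1, 1 => -1
  | 3, 0, 1 => -1 | 3, 1, 0 => 1
  | _, _, _ => 0 end.
Definition rf (b i j : nat) : int :=
  match b, i, j with
  | 0, 0, 0 => 1 | 0, 1, 1 => 1
  | 1, 0, 0 => -1 | 1, 1, 1 => 1
  | 2, 0, 1 => 1 | 2, 1, 0 => 1
  | 3, 0, 1 => -1 | 3, 1, 0 => 1
  | _, _, _ => 0 end.
Definition bf (k : nat) : int :=
  match k with 0 => 1 | 1 => 1 | 2 => -1 | 3 => 1 | _ => 0 end.
Definition lf (b i j : nat) : int :=
  match b, i, j with
  | 0, 0, 0 => 1 | 0, 0, 1 => 1 | 0, 1, 0 => -1 | 0, 1, 1 => 1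
  | 1, 0, 0 => -1 | 1, 0, 1 => 1 | 1, 1, 0 => 1 | 1, 1, 1 => 1
  | 2, 0, 0 => 1 | 2, 0, 1 => 1 | 2, 1, 0 => 1 | 2, 1, 1 => -1
  | 3, 0, 0 => 1 | 3, 0, 1 => -1 | 3, 1, 0 => 1 | 3, 1, 1 => 1
  | _, _, _ => 0 end.

Section QF.
Variable R : realType.
Local Notation C := R[i].

Definition Qm (b : nat) : 'M[C]_2 := \matrix_(i,j) (qf b i j)%:~R.
Definition Rmm (b : nat) : 'M[C]_2 := \matrix_(i,j) (rf b i j)%:~R.
Definition beta0 : 'M[C]_(2 * 2, 1) := \matrix_(i,j) ((bf i)%:~R / 2).
Definition qv (b : nat) : 'M[C]_(1, 2 * 2) := \matrix_(i,j) (qf b (j %/ 2) (j %% 2))%:~R.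
Definition Lm (b : nat) : 'M[C]_2 := \matrix_(i,j) (lf b i j)%:~R.
Definition Tm (b : nat) : 'M[C]_(1 * 2, (2 * 2) * 2) := 2^-1 *: (qv b *t Lm b).

Lemma two_neq0 : (2 : C) != 0. Proof. by rewrite pnatr_eq0. Qed.

Ltac conjsimp := rewrite ?(rmorphM, rmorphD, rmorphN, fmorphV, rmorph_int, rmorph_nat, rmorph1, rmorph0).

Lemma Qm_orth (b : 'I_4) : adjmx (Qm b) *m Qm b = 1%:M.
Proof.
apply/matrixP => i j.
have := ltn_ord i; have := ltn_ord j; have := ltn_ord b.
case: b => [[|[|[|[|b]]]] Hb] //=; case: i => [[|[|i]] Hi] //=; case: j => [[|[|j]] Hj] //= _ _ _;
rewrite !mxE /= !big_ord_recr !big_ord0 /= !mxE /=; conjsimp; ring.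
Qed.


Lemma Rmm_orth (b : 'I_4) : adjmx (Rmm b) *m Rmm b = 1%:M.
Proof.
apply/matrixP => i j.
have := ltn_ord i; have := ltn_ord j; have := ltn_ord b.
case: b => [[|[|[|[|b]]]] Hb] //=; case: i => [[|[|i]] Hi] //=; case: j => [[|[|j]] Hj] //= _ _ _;
rewrite !mxE /= !big_ord_recr !big_ord0 /= !mxE /=; conjsimp; ring.
Qed.

Lemma Rmm_orth' (b : 'I_4) : Rmm b *m adjmx (Rmm b) = 1%:M.
Proof. exact: mulmx1C (Rmm_orth b). Qed.

Lemma twirl (t : 'M[C]_2) :
  \sum_(b < 4) Qm b *m t *m adjmx (Qm b) = (2 * \tr t) *: 1%:M.
Proof.
have [tf' tE] : exists tf' : nat -> nat -> C, forall i j : 'I_2, t i j = tf' i j.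
  by exists (fun i j => t (inord i) (inord j)) => i j; rewrite !inord_val.
apply/matrixP => i j.
rewrite /mxtrace !big_ord_recr big_ord0 /= !mxE !big_ord_recr !big_ord0 /=.
have := ltn_ord i; have := ltn_ord j.
case: i => [[|[|i]] Hi] //=; case: j => [[|[|j]] Hj] //= _ _;
rewrite !mxE /= !big_ord_recr !big_ord0 /= !mxE /= !tE /=; conjsimp; ring.
Qed.

Lemma beta_iso : adjmx beta0 *m beta0 = 1%:M.
Proof.
apply/matrixP => i j; rewrite !ord1.
rewrite !mxE /= !big_ord_recr !big_ord0 /= !mxE /=; conjsimp.
field; rewrite ?two_neq0 //.
Qed.

Lemma U_beta (b : 'I_4) : (Qm b *t Rmm b) *m beta0 = beta0.
Proof.
apply/matrixP => i j; rewrite [j]ord1.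
have := ltn_ord i; have := ltn_ord b.
case: b => [[|[|[|[|b]]]] Hb] //=; case: i => [[|[|[|[|i]]]] Hi] //= _ _;
rewrite !mxE /= !big_ord_recr !big_ord0 /= !mxE /=; field; rewrite ?two_neq0 //.
Qed.

End QF.

Set Implicit Arguments.
Unset Strict Implicit.
Unset Printing Implicit Defensive.

Section QG.
Variable R : realType.
Local Notation C := R[i].

Ltac expand := do 4 (rewrite ?mxE ?big_ord_recr ?big_ord0 /=).
Ltac conjsimpF := rewrite ?(rmorphM, rmorphD, rmorphN, fmorphV, rmorph_int, rmorph_nat, rmorph1, rmorph0).

Lemma T_beta (b : 'I_4) :
  (Tm R b : 'M[C]_(2 * 1, 2 * (2 * 2))) *m (1%:M *t beta0 R) = 2^-1 *: 1%:M.
Proof.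
apply/matrixP => i j.
have := ltn_ord i; have := ltn_ord j; have := ltn_ord b.
case: b => [[|[|[|[|b]]]] Hb] //=; case: i => [[|[|i]] Hi] //=; case: j => [[|[|j]] Hj] //= _ _ _;
rewrite !mxE /= !big_ord_recr !big_ord0 /= !mxE /=; field; rewrite ?two_neq0 //.
Qed.

Lemma qv_complete : \sum_(b < 4) adjmx (qv R b) *m qv R b = 2 *: 1%:M.
Proof.
rewrite !big_ord_recr big_ord0 /=.
apply/matrixP => i j.
have := ltn_ord i; have := ltn_ord j.
case: i => [[|[|[|[|i]]]] Hi] //=; case: j => [[|[|[|[|j]]]] Hj] //= _ _;
rewrite !mxE /= !big_ord_recr !big_ord0 /= !mxE /=; conjsimpF; ring.
Qed.

Lemma L_orth (b : 'I_4) : adjmx (Lm R b) *m Lm R b = 2 *: 1%:M.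
Proof.
apply/matrixP => i j.
have := ltn_ord i; have := ltn_ord j; have := ltn_ord b.
case: b => [[|[|[|[|b]]]] Hb] //=; case: i => [[|[|i]] Hi] //=; case: j => [[|[|j]] Hj] //= _ _ _;
rewrite !mxE /= !big_ord_recr !big_ord0 /= !mxE /=; conjsimpF; ring.
Qed.

Lemma L_orth' (b : 'I_4) : Lm R b *m adjmx (Lm R b) = 2 *: 1%:M.
Proof.
apply/matrixP => i j.
have := ltn_ord i; have := ltn_ord j; have := ltn_ord b.
case: b => [[|[|[|[|b]]]] Hb] //=; case: i => [[|[|i]] Hi] //=; case: j => [[|[|j]] Hj] //= _ _ _;
rewrite !mxE /= !big_ord_recr !big_ord0 /= !mxE /=; conjsimpF; ring.
Qed.

Lemma qv_mix (b : 'I_4) (t : 'M[C]_2) :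
  qv R b *m (t *t (1%:M : 'M[C]_2)) *m adjmx (qv R b) = (\tr t)%:M.
Proof.
have [tf' tE] : exists tf' : nat -> nat -> C, forall i j : 'I_2, t i j = tf' i j.
  by exists (fun i j => t (inord i) (inord j)) => i j; rewrite !inord_val.
apply/matrixP => i j; rewrite !ord1.
rewrite /mxtrace !big_ord_recr big_ord0 /=.
have := ltn_ord b.
case: b => [[|[|[|[|b]]]] Hb] //= _;
expand; rewrite !tE /=; conjsimpF; ring.
Qed.

Lemma assoc4 (t : 'M[C]_2) :
  (t *t (1%:M : 'M[C]_(2 * 2)) : 'M[C]_((2 * 2) * 2)) = (t *t (1%:M : 'M[C]_2)) *t (1%:M : 'M[C]_2).
Proof.
have [tf' tE] : exists tf' : nat -> nat -> C, forall i j : 'I_2, t i j = tf' i j.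
  by exists (fun i j => t (inord i) (inord j)) => i j; rewrite !inord_val.
apply/matrixP => i j.
have := ltn_ord i; have := ltn_ord j.
case: i => [[|[|[|[|[|[|[|[|i]]]]]]]] Hi] //=; case: j => [[|[|[|[|[|[|[|[|j]]]]]]]] Hj] //= _ _;
rewrite !mxE /= !tE /=; ring.
Qed.

Lemma assoc1 (t : 'M[C]_2) :
  (t *t (1%:M : 'M[C]_(2 * 1)) : 'M[C]_((2 * 2) * 1)) = (t *t (1%:M : 'M[C]_2)) *t (1%:M : 'M[C]_1).
Proof.
have [tf' tE] : exists tf' : nat -> nat -> C, forall i j : 'I_2, t i j = tf' i j.
  by exists (fun i j => t (inord i) (inord j)) => i j; rewrite !inord_val.
apply/matrixP => i j.
have := ltn_ord i; have := ltn_ord j.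
case: i => [[|[|[|[|i]]]] Hi] //=; case: j => [[|[|[|[|j]]]] Hj] //= _ _;
rewrite !mxE /= !tE /=; ring.
Qed.

End QG.

Set Implicit Arguments.
Unset Strict Implicit.
Unset Printing Implicit Defensive.

Section QI.
Variable R : realType.
Local Notation C := R[i].

Lemma conj_inv2 : (2^-1 : C)^* = 2^-1.
Proof. by rewrite fmorphV rmorph_nat. Qed.

Lemma delta_dot n (i j : 'I_n) :
  adjmx (delta_mx i 0 : 'M[C]_(n,1)) *m delta_mx j 0 = (i == j)%:R *: 1%:M.
Proof.
apply/matrixP => a b; rewrite [a]ord1 [b]ord1 !mxE (bigD1 i) //= big1 ?addr0.
  rewrite !mxE !eqxx /= rmorph1 mul1r andbT.
  by rewrite mulr1.
by move=> k hk; rewrite !mxE (negbTE hk) /= rmorph0 mul0r.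
Qed.

Lemma sum_outer n : \sum_(c < n) (delta_mx c 0 : 'M[C]_(n,1)) *m adjmx (delta_mx c 0) = 1%:M.
Proof.
apply/matrixP => a b; rewrite summxE !mxE (bigD1 a) //= big1 ?addr0.
  rewrite !mxE big_ord1 !mxE !eqxx /= andbT rmorph_nat mul1r.
  by rewrite eq_sym.
move=> k hk; rewrite !mxE big_ord1 !mxE [a == k]eq_sym (negbTE hk) /=.
by rewrite mul0r.
Qed.

Lemma T_complete : \sum_(b < 4) adjmx (Tm R b) *m Tm R b = 1%:M.
Proof.
have e : forall b : 'I_4, adjmx (Tm R b) *m Tm R b
           = (2^-1 : C) *: ((adjmx (qv R b) *m qv R b) *t 1%:M).
  move=> b; rewrite /Tm adjmxZ conj_inv2 adjmx_tens -scalemxAl -scalemxAr scalerA.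
  rewrite (@tensmx_mul _ (2 * 2) 1 2 2 (2 * 2) 2 (adjmx (qv R b)) (adjmx (Lm R b)) (qv R b) (Lm R b)).
  rewrite L_orth tensZr scalerA.
  congr (_ *: _); by field; rewrite ?two_neq0.
rewrite (eq_bigr _ (fun b _ => e b)) -scaler_sumr -tens_suml qv_complete.
by rewrite tensZl scalerA mulVf ?two_neq0 // scale1r tens11.
Qed.

Lemma T_mix (b : 'I_4) (t : 'M[C]_2) :
  (Tm R b : 'M[C]_(2 * 1, 2 * (2 * 2))) *m (t *t unif R (2 * 2)) *m adjmx (Tm R b)
  = ((2 * 2)%:R^-1 * (4^-1 * (\tr t * 2))) *: 1%:M.
Proof.
rewrite /unif tensZr assoc4 -scalemxAr -scalemxAl /Tm adjmxZ conj_inv2 adjmx_tens.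
rewrite -scalemxAr -scalemxAl scalerA.
rewrite (@tensmx_mul _ 1 (2 * 2) 2 2 (2 * 2) 2 (qv R b) (Lm R b) (t *t 1%:M) 1%:M).
rewrite -scalemxAl scalerA.
rewrite (@tensmx_mul _ 1 (2 * 2) 2 2 1 2 (qv R b *m (t *t 1%:M)) (Lm R b *m 1%:M)
   (adjmx (qv R b)) (adjmx (Lm R b))).
rewrite mulmx1 qv_mix L_orth'.
rewrite -[(\tr t)%:M]scalemx1 tensZl tensZr tens11 !scalerA.
congr (_ *: _); by field; rewrite ?two_neq0.
Qed.

End QI.

Set Implicit Arguments.
Unset Strict Implicit.
Unset Printing Implicit Defensive.

Section QJ.
Variable R : realType.
Local Notation C := R[i].

Lemma half_sum : \sum_(c < 2) (2^-1 : C) = 1.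
Proof. rewrite sumr_const card_ord -mulr_natl; field; rewrite ?two_neq0 //. Qed.

Lemma adj_one_e n c :
  adjmx ((1%:M : 'M[C]_n) *t (delta_mx c 0 : 'M[C]_(2,1))) *m (1%:M *t delta_mx c 0) = 1%:M.
Proof.
rewrite adjmx_tens adjmx1.
rewrite (@tensmx_mul _ n n 1 2 n 1 1%:M (adjmx (delta_mx c 0 : 'M[C]_(2,1))) 1%:M (delta_mx c 0)).
by rewrite mul1mx delta_dot eqxx scale1r tens11.
Qed.

Lemma one_e_outer n c :
  ((1%:M : 'M[C]_n) *t (delta_mx c 0 : 'M[C]_(2,1))) *m adjmx (1%:M *t delta_mx c 0)
  = 1%:M *t (delta_mx c 0 *m adjmx (delta_mx c 0 : 'M[C]_(2,1))).
Proof.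
rewrite adjmx_tens adjmx1.
rewrite (@tensmx_mul _ n n 2 1 n 2 1%:M (delta_mx c 0 : 'M[C]_(2,1)) 1%:M (adjmx (delta_mx c 0 : 'M[C]_(2,1)))).
by rewrite mul1mx.
Qed.

Definition FL (p : 'I_4 * 'I_2) : 'M[C]_(2 * 2, 2 * (2 * 2)) :=
  ((1%:M : 'M[C]_2) *t (delta_mx p.2 0 : 'M[C]_(2,1))) *m (Tm R p.1 : 'M[C]_(2 * 1, 2 * (2 * 2))).
Definition EL := kraus (fun _ : 'I_4 * 'I_2 => (2^-1 : C)) FL.

Lemma EL_CPTP : CPTP EL.
Proof.
apply: kraus_CPTP => [_|]; first by rewrite invr_ge0 ler0n.
have e : forall p, adjmx (FL p) *m FL p = adjmx (Tm R p.1) *m Tm R p.1.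
  move=> p; rewrite /FL adjmxM !mulmxA -(mulmxA (adjmx (Tm R p.1))) (adj_one_e 2 p.2).
  by rewrite mulmx1.
rewrite sum_pair -[RHS]T_complete; apply: eq_bigr => b _.
rewrite (eq_bigr (fun c => 2^-1 *: (adjmx (Tm R b) *m Tm R b))); last first.
  by move=> c _; rewrite e.
by rewrite -scaler_suml half_sum scale1r.
Qed.


Lemma majL : majorizes (iso_chan (beta0 R)) (tens_map (@id_map R 2) (@uniform_state R 2)).
Proof.
rewrite /majorizes ltnn; exists 1%:M; split; first by rewrite /is_isometry adjmx1 mulmx1.
have hN : (fun X => iso_chan (1%:M : 'M[C]_(2 * 2)) (iso_chan (beta0 R) X))
          =1 kraus (fun _ : unit => 1) (fun _ => beta0 R).
  by move=> X; rewrite /kraus big_unit scale1r /iso_chan mul1mx adjmx1 mulmx1.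
exists 2%N, (1%:M : 'M[C]_(2 * 1)), EL.
split; first split; first split.
- split => //; [by rewrite /is_isometry adjmx1 mulmx1 | exact: EL_CPTP].
- by move=> k' V' E' [hk' hV' _] _; have := iso_le hV'; lia.
- move=> tau [_ htr]; rewrite /EL /kraus.
  have e : forall p, FL p *m (tau *t unif R (2 * 2)) *m adjmx (FL p) =
     ((2 * 2)%:R^-1 * (4^-1 * (\tr tau * 2))) *: (1%:M *t
        (delta_mx p.2 0 *m adjmx (delta_mx p.2 0 : 'M[C]_(2,1)))).
    move=> p; rewrite /FL adjmxM !mulmxA -(mulmxA _ (Tm R p.1)) -(mulmxA _ (Tm R p.1 *m _)).
    rewrite T_mix -scalemxAr -scalemxAl mulmx1.
    by rewrite (one_e_outer 2 p.2).
  rewrite (eq_bigr _ (fun p _ => congr1 (fun M => 2^-1 *: M) (e p))).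
  rewrite sum_pair.
  rewrite (eq_bigr (fun b => (2^-1 * ((2 * 2)%:R^-1 * (4^-1 * (\tr tau * 2)))) *: 1%:M)); last first.
    move=> b _; rewrite (eq_bigr (fun c => (2^-1 * ((2 * 2)%:R^-1 * (4^-1 * (\tr tau * 2)))) *:
          (1%:M *t (delta_mx c 0 *m adjmx (delta_mx c 0 : 'M[C]_(2,1)))))); last first.
      by move=> c _; rewrite scalerA.
    by rewrite -scaler_sumr -tens_sumr sum_outer tens11.
  rewrite sumr_const card_ord -[_ *+ 4]scaler_nat scalerA /unif htr; congr (_ *: _).
  by rewrite -mulr_natl; field; rewrite ?two_neq0 ?pnatr_eq0.
- move=> X; rewrite (superchan_krausE _ X hN (frefl EL)).
  rewrite (tens_mapE (@id_krausE R 2) (@unif_krausE R 2)) /kraus sum_pair big_unit.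
  rewrite sum_pair.
  have e : forall (b : 'I_4) (c : 'I_2), FL (b, c) *m (1%:M *t beta0 R) *m 1%:M
        = 2^-1 *: ((1%:M : 'M[C]_2) *t (delta_mx c 0 : 'M[C]_(2,1))).
    move=> b c; rewrite mulmx1 /FL -mulmxA T_beta.
    by rewrite -scalemxAr mulmx1.
  rewrite [RHS](eq_bigr (fun b => \sum_(c < 2) (2^-1 * 2^-1 * 2^-1) *: ((1%:M *t delta_mx c 0) *m X
          *m adjmx ((1%:M : 'M[C]_2) *t (delta_mx c 0 : 'M[C]_(2,1)))))); last first.
    move=> b _; apply: eq_bigr => c _; rewrite big_unit e mulr1.
    rewrite adjmxZ conj_inv2 -scalemxAr -!scalemxAl !scalerA.
    by congr (_ *: _); rewrite mulrA.
  rewrite sumr_const card_ord -[_ *+ 4]scaler_nat scaler_sumr; apply: eq_bigr => c _.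
  rewrite scalerA; congr (_ *: _).
  by rewrite -mulr_natl; field; rewrite ?two_neq0.
Qed.

End QJ.

Set Implicit Arguments.
Unset Strict Implicit.
Unset Printing Implicit Defensive.

Section QK.
Variable R : realType.
Local Notation C := R[i].

Lemma adj_one_ee n d (c c' : 'I_d) :
  adjmx ((1%:M : 'M[C]_n) *t (delta_mx c 0 : 'M[C]_(d,1))) *m (1%:M *t delta_mx c' 0)
  = (c == c')%:R *: 1%:M.
Proof.
rewrite adjmx_tens adjmx1.
rewrite (@tensmx_mul _ n n 1 d n 1 1%:M (adjmx (delta_mx c 0 : 'M[C]_(d,1))) 1%:M (delta_mx c' 0)).
by rewrite mul1mx delta_dot tensZr tens11.
Qed.

Lemma one_e_outer_d n d (c : 'I_d) :
  ((1%:M : 'M[C]_n) *t (delta_mx c 0 : 'M[C]_(d,1))) *m adjmx (1%:M *t delta_mx c 0)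
  = 1%:M *t (delta_mx c 0 *m adjmx (delta_mx c 0 : 'M[C]_(d,1))).
Proof.
rewrite adjmx_tens adjmx1.
rewrite (@tensmx_mul _ n n d 1 n d 1%:M (delta_mx c 0 : 'M[C]_(d,1)) 1%:M (adjmx (delta_mx c 0 : 'M[C]_(d,1)))).
by rewrite mul1mx.
Qed.

Definition Um (g : nat) : 'M[C]_(2 * 2) := Qm R g *t Rmm R g.
Definition Tw : chan_map R (2 * 2) (2 * 2) :=
  kraus (fun _ : 'I_(2 * 2) => (2 * 2)%:R^-1) (fun g => Um g).

Lemma Um_orth (g : 'I_(2 * 2)) : adjmx (Um g) *m Um g = 1%:M.
Proof.
rewrite /Um adjmx_tens.
rewrite (@tensmx_mul _ 2 2 2 2 2 2 (adjmx (Qm R g)) (adjmx (Rmm R g)) (Qm R g) (Rmm R g)).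
by rewrite (@Qm_orth R g) (@Rmm_orth R g) tens11.
Qed.

Lemma Um_rot (g : 'I_(2 * 2)) (t : 'M[C]_2) :
  Um g *m (t *t (1%:M : 'M[C]_2)) *m adjmx (Um g) = (Qm R g *m t *m adjmx (Qm R g)) *t 1%:M.
Proof.
rewrite /Um adjmx_tens.
rewrite (@tensmx_mul _ 2 2 2 2 2 2 (Qm R g) (Rmm R g) t 1%:M).
rewrite (@tensmx_mul _ 2 2 2 2 2 2 (Qm R g *m t) (Rmm R g *m 1%:M) (adjmx (Qm R g)) (adjmx (Rmm R g))).
by rewrite mulmx1 (@Rmm_orth' R g).
Qed.

Lemma sum_quarter : \sum_(g < 2 * 2) ((2 * 2)%:R^-1 : C) = 1.
Proof. rewrite sumr_const card_ord -mulr_natl; field; by rewrite ?pnatr_eq0. Qed.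

Lemma Tw_CPTP : CPTP Tw.
Proof.
apply: kraus_CPTP => [_|]; first by rewrite invr_ge0 ler0n.
rewrite (eq_bigr (fun _ => (2 * 2)%:R^-1 *: 1%:M)); last by move=> g _; rewrite Um_orth.
by rewrite -scaler_suml sum_quarter scale1r.
Qed.

Lemma majTw : majorizes Tw (@id_map R 1).
Proof.
rewrite /majorizes; have -> : (1 < 2 * 2)%N = true by [].
exists (beta0 R); split; first exact: beta_iso.
apply: (maj_k1 (frefl Tw) (beta_iso R)) => X.
rewrite /kraus /iso_chan /id_map.
rewrite (eq_bigr (fun _ => (2 * 2)%:R^-1 *: (beta0 R *m X *m adjmx (beta0 R)))); last first.
  by move=> g _; rewrite (@U_beta R g).
by rewrite -scaler_suml sum_quarter scale1r.
Qed.

Lemma majPhi : majorizes (@id_map R 1) (iso_chan (beta0 R)).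
Proof.
rewrite /majorizes; have -> : (2 * 2 < 1)%N = false by [].
exists (beta0 R); split; first exact: beta_iso.
have hN : (fun X => iso_chan (beta0 R) (@id_map R 1 X)) =1
          kraus (fun _ : unit => 1) (fun _ => beta0 R).
  by move=> X; rewrite /kraus big_unit scale1r.
have i1 : is_isometry (1%:M : 'M[C]_1) by rewrite /is_isometry adjmx1 mulmx1.
apply: (maj_k1 hN i1) => X.
by rewrite /kraus big_unit scale1r mulmx1.
Qed.

End QK.

Set Implicit Arguments.
Unset Strict Implicit.
Unset Printing Implicit Defensive.

Section QL.
Variable R : realType.
Local Notation C := R[i].

Definition Ag (g : 'I_(2 * 2)) : 'M[C]_(2 * (2 * 2), 2 * 1) :=
  (1%:M : 'M[C]_2) *t (delta_mx g 0 : 'M[C]_(2 * 2, 1)).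
Definition Bm (g : 'I_(2 * 2)) (c : 'I_2) : 'M[C]_((2 * 2) * 2, (2 * 2) * 1) :=
  Um R g *t (delta_mx c 0 : 'M[C]_(2, 1)).
Definition FU (p : 'I_(2 * 2) * 'I_2) : 'M[C]_((2 * 2) * 2, 2 * ((2 * 2) * 2)) :=
  Bm p.1 p.2 *m adjmx ((1%:M : 'M[C]_2) *t Ag p.1).
Definition EU := kraus (fun _ : 'I_(2 * 2) * 'I_2 => (2^-1 : C)) FU.

Lemma Bm_orth g c : adjmx (Bm g c) *m Bm g c = 1%:M.
Proof.
rewrite /Bm adjmx_tens.
rewrite (@tensmx_mul _ (2 * 2) (2 * 2) 1 2 (2 * 2) 1 (adjmx (Um R g))
   (adjmx (delta_mx c 0 : 'M[C]_(2,1))) (Um R g) (delta_mx c 0)).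
by rewrite Um_orth delta_dot eqxx scale1r tens11.
Qed.

Lemma Ag_out g : Ag g *m adjmx (Ag g) = 1%:M *t (delta_mx g 0 *m adjmx (delta_mx g 0 : 'M[C]_(2 * 2, 1))).
Proof. exact: one_e_outer_d. Qed.

Lemma EU_CPTP : CPTP EU.
Proof.
apply: kraus_CPTP => [_|]; first by rewrite invr_ge0 ler0n.
have e : forall p, adjmx (FU p) *m FU p
   = ((1%:M : 'M[C]_2) *t ((1%:M : 'M[C]_2) *t (delta_mx p.1 0 *m adjmx (delta_mx p.1 0 : 'M[C]_(2 * 2, 1)))) : 'M[C]_(2 * ((2 * 2) * 2))).
  move=> p; rewrite /FU adjmxM adjmxK !mulmxA -(mulmxA _ (adjmx (Bm p.1 p.2))) Bm_orth mulmx1.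
  rewrite adjmx_tens adjmx1.
  rewrite (@tensmx_mul _ 2 2 (2 * (2 * 2)) (2 * 1) 2 (2 * (2 * 2)) 1%:M (Ag p.1) 1%:M (adjmx (Ag p.1))).
  by rewrite mulmx1 Ag_out.
rewrite sum_pair.
rewrite (eq_bigr (fun g => ((1%:M : 'M[C]_2) *t ((1%:M : 'M[C]_2) *t (delta_mx g 0 *m adjmx (delta_mx g 0 : 'M[C]_(2 * 2, 1)))) : 'M[C]_(2 * ((2 * 2) * 2))))); last first.
  move=> g _; rewrite (eq_bigr (fun c => 2^-1 *: ((1%:M : 'M[C]_2) *t ((1%:M : 'M[C]_2) *t (delta_mx g 0 *m adjmx (delta_mx g 0 : 'M[C]_(2 * 2, 1)))) : 'M[C]_(2 * ((2 * 2) * 2))))); last first.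
    by move=> c _; rewrite e.
  by rewrite -scaler_suml half_sum scale1r.
have h : \sum_(g < 2 * 2) ((1%:M : 'M[C]_2) *t ((1%:M : 'M[C]_2) *t
   (delta_mx g 0 *m adjmx (delta_mx g 0 : 'M[C]_(2 * 2, 1))))) = 1%:M.
  by rewrite -tens_sumr -tens_sumr sum_outer !tens11.
exact: h.
Qed.


Lemma comp_U p (g : 'I_(2 * 2)) :
  FU p *m ((1%:M : 'M[C]_2) *t Ag g) = (p.1 == g)%:R *: (Bm p.1 p.2 : 'M[C]_((2 * 2) * 2, 2 * (2 * 1))).
Proof.
rewrite /FU -mulmxA adjmx_tens adjmx1.
rewrite (@tensmx_mul _ 2 2 (2 * 1) (2 * (2 * 2)) 2 (2 * 1) 1%:M (adjmx (Ag p.1)) 1%:M (Ag g)).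
rewrite mul1mx /Ag adj_one_ee tensZr tens11 -scalemxAr mulmx1.
by [].
Qed.

Lemma EU_core p (t : 'M[C]_2) :
  FU p *m (t *t (1%:M : 'M[C]_((2 * 2) * 2))) *m adjmx (FU p)
  = ((Qm R p.1 *m t *m adjmx (Qm R p.1)) *t 1%:M) *t
      (delta_mx p.2 0 *m adjmx (delta_mx p.2 0 : 'M[C]_(2, 1))).
Proof.
have core : adjmx ((1%:M : 'M[C]_2) *t Ag p.1) *m (t *t (1%:M : 'M[C]_(2 * (2 * 2))))
              *m ((1%:M : 'M[C]_2) *t Ag p.1) = t *t (1%:M : 'M[C]_(2 * 1)).
  rewrite adjmx_tens adjmx1.
  rewrite (@tensmx_mul _ 2 2 (2 * 1) (2 * (2 * 2)) 2 (2 * (2 * 2)) 1%:M (adjmx (Ag p.1)) t 1%:M).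
  rewrite (@tensmx_mul _ 2 2 (2 * 1) (2 * (2 * 2)) 2 (2 * 1) (1%:M *m t) (adjmx (Ag p.1) *m 1%:M) 1%:M (Ag p.1)).
  by rewrite mul1mx mulmx1 mulmx1 /Ag adj_one_ee eqxx scale1r.
have -> : FU p *m (t *t (1%:M : 'M[C]_((2 * 2) * 2))) *m adjmx (FU p)
   = Bm p.1 p.2 *m (adjmx ((1%:M : 'M[C]_2) *t Ag p.1) *m (t *t (1%:M : 'M[C]_(2 * (2 * 2))))
              *m ((1%:M : 'M[C]_2) *t Ag p.1)) *m adjmx (Bm p.1 p.2).
  by rewrite /FU adjmxM adjmxK !mulmxA.
rewrite core assoc1 /Bm adjmx_tens.
rewrite (@tensmx_mul _ (2 * 2) (2 * 2) 2 1 (2 * 2) 1 (Um R p.1) (delta_mx p.2 0) (t *t 1%:M) 1%:M).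
rewrite (@tensmx_mul _ (2 * 2) (2 * 2) 2 1 (2 * 2) 2 (Um R p.1 *m (t *t 1%:M)) (delta_mx p.2 0 *m 1%:M)
   (adjmx (Um R p.1)) (adjmx (delta_mx p.2 0 : 'M[C]_(2,1)))).
by rewrite Um_rot mulmx1.
Qed.

End QL.

Set Implicit Arguments.
Unset Strict Implicit.
Unset Printing Implicit Defensive.

Section QM.
Variable R : realType.
Local Notation C := R[i].

Lemma EU_mix (tau : 'M[C]_2) : density tau ->
  @EU R (tau *t unif R ((2 * 2) * 2)) = unif R ((2 * 2) * 2).
Proof.
move=> [_ htr]; rewrite /EU /kraus /unif.
have e : forall p, @FU R p *m (tau *t (((2 * 2) * 2)%:R^-1 *: 1%:M)) *m adjmx (@FU R p)
   = ((2 * 2) * 2)%:R^-1 *: (((Qm R p.1 *m tau *m adjmx (Qm R p.1)) *t 1%:M) *t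
      (delta_mx p.2 0 *m adjmx (delta_mx p.2 0 : 'M[C]_(2, 1)))).
  by move=> p; rewrite tensZr -scalemxAr -scalemxAl EU_core.
rewrite (eq_bigr _ (fun p _ => congr1 (fun M => 2^-1 *: M) (e p))) sum_pair.
rewrite (eq_bigr (fun g : 'I_(2 * 2) => (((2 * 2) * 2)%:R^-1 * 2^-1) *:
     (((Qm R g *m tau *m adjmx (Qm R g)) *t (1%:M : 'M[C]_2)) *t (1%:M : 'M[C]_2)))); last first.
  move=> g _; rewrite (eq_bigr (fun c : 'I_2 => (((2 * 2) * 2)%:R^-1 * 2^-1) *:
     (((Qm R g *m tau *m adjmx (Qm R g)) *t (1%:M : 'M[C]_2)) *t
      (delta_mx c 0 *m adjmx (delta_mx c 0 : 'M[C]_(2, 1)))))); last first.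
    by move=> c _; rewrite scalerA mulrC.
  by rewrite -scaler_sumr -tens_sumr sum_outer.
have tw : \sum_(g < 2 * 2) Qm R g *m tau *m adjmx (Qm R g) = (2 * \tr tau) *: 1%:M
  := twirl tau.
rewrite -scaler_sumr -tens_suml -tens_suml tw tensZl tensZl !tens11 scalerA htr.
congr (_ *: _); by field; rewrite ?two_neq0.
Qed.

Lemma majU : majorizes (tens_map (@id_map R 2) (@uniform_state R (2 * 2)))
                       (tens_map (@Tw R) (@uniform_state R 2)).
Proof.
rewrite /majorizes; have -> : ((2 * 2) * 2 < 2 * (2 * 2))%N = false by [].
exists (1%:M : 'M[C]_((2 * 2) * 2)); split; first by rewrite /is_isometry adjmx1 mulmx1.
have hN : (fun X => iso_chan (1%:M : 'M[C]_((2 * 2) * 2))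
             (tens_map (@id_map R 2) (@uniform_state R (2 * 2)) X))
          =1 kraus (fun _ : 'I_(2 * 2) => (2 * 2)%:R^-1) (@Ag R).
  move=> X; rewrite /iso_chan (tens_mapE (@id_krausE R 2) (@unif_krausE R (2 * 2))).
  rewrite /kraus sum_pair big_unit mul1mx adjmx1 mulmx1.
  by apply: eq_bigr => g _; rewrite mul1r.
exists 2%N, (1%:M : 'M[C]_(2 * (2 * 1))), (@EU R).
split; first split; first split.
- split => //; [by rewrite /is_isometry adjmx1 mulmx1 | exact: EU_CPTP].
- by move=> k' V' E' [hk' hV' _] _; have := iso_le hV'; lia.
- exact: EU_mix.
- move=> X; rewrite (superchan_krausE _ X hN (frefl (@EU R))).
  rewrite (tens_mapE (frefl (@Tw R)) (@unif_krausE R 2)) /kraus.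
  apply: eq_bigr => p _.
  rewrite (bigD1 p.1) //= big1 ?addr0.
    by rewrite mulmx1 comp_U eqxx scale1r mulrC.
  move=> g hg; rewrite mulmx1 comp_U eq_sym (negbTE hg) scale0r.
  by rewrite mul0mx adjmx0 mulmx0 scaler0.
Qed.

End QM.

Set Implicit Arguments.
Unset Strict Implicit.
Unset Printing Implicit Defensive.

Section QN.
Variable R : realType.
Local Notation C := R[i].

Lemma CPTP_tens_kraus n m n' m' (N : chan_map R n m) (M : chan_map R n' m')
  (I J : finType) (c : I -> C) (A : I -> 'M[C]_(m,n)) (d : J -> C) (B : J -> 'M[C]_(m',n')) :
  N =1 kraus c A -> M =1 kraus d B -> (forall i, 0 <= c i) -> (forall j, 0 <= d j) ->
  \sum_i c i *: (adjmx (A i) *m A i) = 1%:M -> \sum_j d j *: (adjmx (B j) *m B j) = 1%:M ->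
  CPTP (tens_map N M).
Proof.
move=> hN hM hc hd sA sB.
apply: (CPTP_ext (tens_mapE hN hM)); apply: kraus_CPTP => [p|]; first exact: mulr_ge0.
rewrite sum_pair.
rewrite (eq_bigr (fun i => (c i *: (adjmx (A i) *m A i)) *t (\sum_j d j *: (adjmx (B j) *m B j)))).
  by rewrite -tens_suml sA sB tens11.
move=> i _; rewrite tens_sumr; apply: eq_bigr => j _ /=.
rewrite adjmx_tens tensmx_mul tensZl tensZr scalerA.
by [].
Qed.

Lemma unif_sum d : (0 < d)%N ->
  \sum_(i < d) d%:R^-1 *: (adjmx (delta_mx i 0 : 'M[C]_(d,1)) *m delta_mx i 0) = 1%:M.
Proof.
move=> hd.
rewrite (eq_bigr (fun _ => d%:R^-1 *: 1%:M)); last first.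
  by move=> i _; rewrite delta_dot eqxx scale1r.
rewrite sumr_const card_ord -scaler_nat scalerA mulrV ?scale1r //.
by rewrite unitfE pnatr_eq0 -lt0n.
Qed.

Lemma id_sum k : \sum_(u : unit) 1 *: (adjmx (1%:M : 'M[C]_k) *m 1%:M) = 1%:M.
Proof. by rewrite big_unit scale1r adjmx1 mulmx1. Qed.

Lemma Tw_sum : \sum_(g < 2 * 2) (2 * 2)%:R^-1 *: (adjmx (Um R g) *m Um R g) = (1%:M : 'M[C]_(2 * 2)).
Proof.
rewrite (eq_bigr (fun _ => (2 * 2)%:R^-1 *: 1%:M)); last by move=> g _; rewrite Um_orth.
by rewrite -scaler_suml sum_quarter scale1r.
Qed.

Lemma nnc1 : forall _ : unit, (0 : C) <= 1.
Proof. by move=> _; exact: ler01. Qed.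

Lemma nncd d : forall _ : 'I_d, (0 : C) <= d%:R^-1.
Proof. by move=> _; rewrite invr_ge0 ler0n. Qed.

Lemma tens_unif a b :
  tens_map (@uniform_state R a) (@uniform_state R b) = (@uniform_state R (a * b) : chan_map R (1 * 1) (a * b)).
Proof.
apply: functional_extensionality => X.
rewrite /tens_map /uniform_state big_ord1 big_ord1 /=.
rewrite /mxtrace !big_ord1 !mxE /= mulr1n /unif.
rewrite !tensZl !tensZr tens11 !scalerA natrM invfM.
congr (_ *: _); have -> : X 0 0 = X ord0 ord0 by [].
ring.
Qed.

End QN.

Theorem theorem17 (R : realType)
  (H : forall n m : nat, chan_map R n m -> R) (hH : channel_entropy H)
  (n m : nat) (V : 'M[R[i]]_(m, n)) :
  (0 < n)%N -> is_isometry V ->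
  H n m (iso_chan V) = - log2 (n%:R : R) /\
  ((1 < n)%N -> H n m (iso_chan V) < 0).
Proof.
move=> hn hV.
have hH' := hH; case: hH' => _ hmono hadd hnorm.
pose f := fun k => H k k (@id_map R k).
have fmul : forall a b, (0 < a)%N -> (0 < b)%N -> f (a * b)%N = f a + f b.
  by move=> a b ha hb; exact: (@h_mul R H hH a b ha hb).
have fmono : forall a b, (0 < b)%N -> (b <= a)%N -> f a <= f b.
  by move=> a b hb hba; exact: (@h_mono R H hH a b hb hba).
have f1 : f 1%N = 0.
  by have := fmul 1%N 1%N isT isT; rewrite mul1n => h; lra.
have cu : forall d, (0 < d)%N -> CPTP (@uniform_state R d) by move=> d hd; exact: CPTP_unif.
have c_id_u2 : CPTP (tens_map (@id_map R 2) (@uniform_state R 2)).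
  exact: (CPTP_tens_kraus (@id_krausE R 2) (@unif_krausE R 2) (@nnc1 R) (@nncd R 2)
            (@id_sum R 2) (@unif_sum R 2 isT)).
have c_id_u4 : CPTP (tens_map (@id_map R 2) (@uniform_state R (2 * 2))).
  exact: (CPTP_tens_kraus (@id_krausE R 2) (@unif_krausE R (2 * 2)) (@nnc1 R) (@nncd R (2 * 2))
            (@id_sum R 2) (@unif_sum R (2 * 2) isT)).
have c_Tw_u2 : CPTP (tens_map (@Tw R) (@uniform_state R 2)).
  exact: (CPTP_tens_kraus (frefl (@Tw R)) (@unif_krausE R 2) (@nncd R (2 * 2)) (@nncd R 2)
            (@Tw_sum R) (@unif_sum R 2 isT)).
have cPhi : CPTP (iso_chan (beta0 R)) by apply: CPTP_iso; exact: beta_iso.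
have e_u4 : H 1%N (2 * 2)%N (@uniform_state R (2 * 2)) = 1 + 1.
  have h := hadd 1%N 2%N 1%N 2%N (@uniform_state R 2) (@uniform_state R 2) isT isT isT isT
    (cu 2%N isT) (cu 2%N isT).
  rewrite tens_unif hnorm in h; exact: h.
have e1 : H (2 * 1)%N (2 * 2)%N (tens_map (@id_map R 2) (@uniform_state R 2)) = f 2%N + 1.
  by rewrite hadd // ?hnorm //; [exact: CPTP_id | exact: cu].
have e2 : H (2 * 1)%N (2 * (2 * 2))%N (tens_map (@id_map R 2) (@uniform_state R (2 * 2)))
          = f 2%N + (1 + 1).
  by rewrite hadd // ?e_u4 //; [exact: CPTP_id | exact: cu].
have e3 : H ((2 * 2) * 1)%N ((2 * 2) * 2)%N (tens_map (@Tw R) (@uniform_state R 2))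
          = H (2 * 2)%N (2 * 2)%N (@Tw R) + 1.
  by rewrite hadd // ?hnorm //; [exact: Tw_CPTP | exact: cu].
have iTw : H (2 * 2)%N (2 * 2)%N (@Tw R) <= f 1%N.
  by apply: hmono => //; [exact: Tw_CPTP | exact: CPTP_id | exact: majTw].
have iPhi : f 1%N <= H 1%N (2 * 2)%N (iso_chan (beta0 R)).
  by apply: hmono => //; [exact: CPTP_id | exact: majPhi].
have iL : H 1%N (2 * 2)%N (iso_chan (beta0 R))
          <= H (2 * 1)%N (2 * 2)%N (tens_map (@id_map R 2) (@uniform_state R 2)).
  by apply: hmono => //; exact: majL.
have iU : H (2 * 1)%N (2 * (2 * 2))%N (tens_map (@id_map R 2) (@uniform_state R (2 * 2)))
          <= H ((2 * 2) * 1)%N ((2 * 2) * 2)%N (tens_map (@Tw R) (@uniform_state R 2)).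
  by apply: hmono => //; exact: majU.
have f2 : f 2%N = -1.
  rewrite e1 in iL; rewrite e2 e3 in iU; lra.
have fn := log_char fmul fmono f2 hn.
have hiso : H n m (iso_chan V) = f n by exact: (@H_iso R H hH n m V hn hV).
split; first by rewrite hiso fn.
move=> h1n; rewrite hiso fn oppr_lt0 /log2 divr_gt0 // ln_gt0 //.
  by rewrite ltr1n.
by rewrite ltr1n.
Qed.
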